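(* Let $X$ be a pointed set and $k\ge 1$. Then the diagram $$\mathrm{ab}\circ H_k=\pi_k\circ\mu\colon F[X]\to \bar{\mathbb Z}[X^{\wedge k}]$$ commutes, where $H_k\colon F[X]\to F[X^{\wedge k}]$ is the combinatorial James–Hopf map, $\mu\colon F[X]\to\mathbb Z\langle\langle X\rangle\rangle$ is the Magnus embedding, $\pi_k$ is the projection of a formal power series onto its homogeneous component of degree $k$, and $\mathrm{ab}\colon F[X^{\wedge k}]\to\bar{\mathbb Z}[X^{\wedge k}]$ is abelianization.
   Context: For a pointed set $X$ with basepoint $*$, $F[X]$ is the free group on $X$ modulo the relation $*=1$ (the reduced free group; for pointed simplicial sets it is applied degreewise, Milnor's construction). $X^{\wedge k}$ is the $k$-fold smash product; its non-basepoint elements are $x_1\wedge\dots\wedge x_k$ with all $x_i\neq *$. $\bar{\mathbb Z}[Y]=\mathbb Z[Y]/\mathbb Z[*]$ is the free abelian group on $Y\setminus\{*\}$. $\mathbb Z\langle\langle X\rangle\rangle$ is the ring of formal power series in the non-commuting variables $X\setminus\{*\}$, and its degree-$k$ homogeneous component is identified with $\bar{\mathbb Z}[X^{\wedge k}]\cong\bar{\mathbb Z}[X]^{\otimes k}$ via $x_1\wedge\dots\wedge x_k\leftrightarrow x_1\cdots x_k$. The Magnus embedding is the homomorphism $\mu$ with $\mu(x)=1+x$ for $x\in X\setminus\{*\}$. Combinatorial James–Hopf map: for a reduced word $w=x_1^{\varepsilon_1}\cdots x_n^{\varepsilon_n}\in F[X]$ ($x_i\in X$, $\varepsilon_i=\pm1$),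 $$H_k(w)=\prod_{(i_1,\dots,i_k)}(x_{i_1}\wedge\dots\wedge x_{i_k})^{\varepsilon_{i_1}\cdots\varepsilon_{i_k}}\in F[X^{\wedge k}],$$ the product taken over all sequences $1\le i_1,\dots,i_k\le n$ with $i_j\le i_{j+1}-\frac{\varepsilon_{i_{j+1}}+1}{2}$ for all $j$ (i.e. $i_j<i_{j+1}$ if $\varepsilon_{i_{j+1}}=1$, and $i_j\le i_{j+1}$ if $\varepsilon_{i_{j+1}}=-1$), with factors arranged in right lexicographic order: $(i_1,\dots,i_k)$ precedes $(j_1,\dots,j_k)$ iff at the largest position $m$ where they differ, $i_m<j_m$. On positive words this restricts to the classical combinatorial James–Hopf map $x_1\cdots x_n\mapsto\prod_{i_1<\dots<i_k}x_{i_1}\wedge\dots\wedge x_{i_k}$ on the James construction. For simplicial sets $H_k$ is defined degreewise. *)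

(* Defs.v *)
From HB Require Import structures.
From mathcomp Require Import all_boot all_order all_algebra.
Set Implicit Arguments. Unset Strict Implicit. Unset Printing Implicit Defensive.
Import Order.TTheory GRing.Theory Num.Theory.
Local Open Scope ring_scope.

Section JamesHopf.
Variables (X : eqType) (pt : X).

(* A letter x^eps of F[X]: (x, true) = x^{+1}, (x, false) = x^{-1}. *)
Definition letter := (X * bool)%type.

(* Reduced words representing elements of F[X] (reduced free group:
   no basepoint letters, no cancelling adjacent pairs). *)
Definition reduced_word (w : seq letter) : bool :=
  all (fun l => l.1 != pt) w &&
  [forall i : 'I_(size w).-1,
     ~~ (((nth (pt, true) w i).1 == (nth (pt, true) w i.+1).1) &&
         ((nth (pt, true) w i).2 == ~~ (nth (pt, true) w i.+1).2))].

(* All index sequences (i_1,...,i_k) in {0,...,n-1}^k, listed in right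
   lexicographic order (last coordinate is the most significant). *)
Fixpoint idx_tuples (n k : nat) : seq (seq nat) :=
  match k with
  | 0 => [:: [::]]
  | k'.+1 => flatten [seq [seq rcons t i | t <- idx_tuples n k'] | i <- iota 0 n]
  end.

Definition admissible (w : seq letter) (t : seq nat) : bool :=
  [forall j : 'I_(size t).-1,
     let a := nth 0%N t j in let b := nth 0%N t j.+1 in
     if (nth (pt, true) w b).2 then (a < b)%N else (a <= b)%N].

(* Combinatorial James-Hopf map H_k(w), as a word in F[X^{/\k}]: a list of
   letters (x_{i_1} /\ ... /\ x_{i_k})^{eps_{i_1}...eps_{i_k}}, the smash
   element being represented by the k-tuple (seq) of its components. *)
Definition james_hopf (k : nat) (w : seq letter) : seq (seq X * bool) :=
  [seq ([seq (nth (pt, true) w i).1 | i <- t],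
        ~~ odd (count (fun i => ~~ (nth (pt, true) w i).2) t))
  | t <- idx_tuples (size w) k & admissible w t].

(* Zbar[Y]-valued abelianization of a word in F[Y]: coefficient of the basis
   element y in ab(word). Elements of Zbar[Y] are represented by their
   coefficient functions. *)
Definition ab (Y : eqType) (u : seq (Y * bool)) (y : Y) : int :=
  \sum_(l <- u) (if l.1 == y then (if l.2 then 1 else -1) else 0).

(* Formal power series in non-commuting variables X: coefficient functions
   on monomials (words in X). *)
Definition pseries := seq X -> int.

Definition ps_one : pseries := fun m => if m is [::] then 1 else 0.

Definition ps_mul (f g : pseries) : pseries :=
  fun m => \sum_(i < (size m).+1) f (take i m) * g (drop i m).

(* Magnus image of a letter: 1 + x, or (1 + x)^{-1} = sum_n (-x)^n. *)
Definition magnus_letter (l : letter) : pseries :=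
  fun m =>
    if l.2 then (if m is [::] then 1 else if m == [:: l.1] then 1 else 0)
    else (if all (eq_op^~ l.1) m then (-1) ^+ size m else 0).

Definition magnus (w : seq letter) : pseries :=
  foldr (fun l acc => ps_mul (magnus_letter l) acc) ps_one w.

Definition pi_k (k : nat) (f : pseries) : pseries :=
  fun m => if size m == k then f m else 0.

End JamesHopf.

(* Main.v *)
Require Import Defs.
From HB Require Import structures.
From mathcomp Require Import all_boot all_order all_algebra.
Import Order.TTheory GRing.Theory Num.Theory.

Lemma uniq_flatten_map (A B : eqType) (g : B -> A) (f : A -> seq B) s :
  uniq s -> (forall i, uniq (f i)) -> (forall i y, y \in f i -> g y = i) ->
  uniq (flatten (map f s)).
Proof.
move=> + Hu Hg; elim: s => //= a s IH /andP[Ha Hs].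
rewrite cat_uniq Hu IH // andbT.
apply/hasPn => y /flattenP [r /mapP [j Hj ->]] Hy; apply/negP => Hya.
have E1 := Hg _ _ Hya; have E2 := Hg _ _ Hy.
by move: Ha; rewrite -E1 E2 Hj.
Qed.

Lemma mem_idx n k t :
  (t \in idx_tuples n k) = (size t == k) && all (fun i => i < n) t.
Proof.
elim: k t => [|k IH] t /=; first by case: t.
case/lastP: t => [|t a].
  apply/negbTE/negP => /flattenP [r /mapP [i _ ->]] /mapP [s _].
  by case: s.
rewrite size_rcons all_rcons eqSS; apply/idP/idP.
  move=> /flattenP [r /mapP [i Hi ->]] /mapP [s Hs /rcons_inj [-> ->]].
  move: Hs; rewrite IH => /andP[-> ->]; rewrite mem_iota in Hi.
  by rewrite add0n in Hi; case/andP: Hi => _ ->.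
case/and3P => Hs Ha Hall; apply/flattenP.
exists [seq rcons s a | s <- idx_tuples n k].
  by apply/mapP; exists a => //; rewrite mem_iota.
by apply/mapP; exists t => //; rewrite IH Hs.
Qed.

Lemma uniq_idx n k : uniq (idx_tuples n k).
Proof.
elim: k => //= k IH.
apply: (@uniq_flatten_map _ _ (fun t : seq nat => last 0 t) (fun i => [seq rcons t i | t <- idx_tuples n k])); first exact: iota_uniq.
  by move=> i; rewrite map_inj_uniq //; apply: rcons_injl.
by move=> i y /mapP [t _ ->]; rewrite last_rcons.
Qed.

Section Aux.
Variables (X : eqType) (pt : X).
Local Notation x0 := (pt, true).

Definition adm_rel (w : seq (X * bool)) : rel nat :=
  fun a b => if (nth x0 w b).2 then a < b else a <= b.

Lemma admissibleE w t : admissible pt w t = sorted (adm_rel w) t.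
Proof.
apply/forallP/(sortedP 0) => H i.
  move=> Hi; have Hi' : i < (size t).-1 by move: Hi; case: (size t).
  exact: (H (Ordinal Hi')).
case: i => i Hi /=; apply: H; by move: Hi; case: (size t).
Qed.

Lemma adm_rel_le w a b : adm_rel w a b -> a <= b.
Proof. by rewrite /adm_rel; case: ifP => // _ /ltnW. Qed.

Definition blk (l : X * bool) (s : seq X) : bool :=
  (l.2 ==> (size s <= 1)) && all (pred1 l.1) s.

Fixpoint E (w : seq (X * bool)) (m : seq X) : seq (seq nat) :=
  match w with
  | [::] => if m is [::] then [:: [::]] else [::]
  | l :: w' => flatten [seq (if blk l (take i m) then
        [seq nseq i 0 ++ map S t | t <- E w' (drop i m)] else [::])
      | i <- iota 0 (size m).+1]
  end.

Lemma sorted_decomp l w t : sorted (adm_rel (l :: w)) t ->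
  exists i t', t = nseq i 0 ++ map S t'.
Proof.
elim: t => [|a t IH] /=; first by exists 0, [::].
move=> Hp; have [i [t' Et]] := IH (path_sorted Hp).
case: a Hp => [|a] Hp; first by exists i.+1, t'; rewrite Et.
exists 0, (a :: t'); case: i Et => [|i] Et; first by rewrite Et.
by rewrite Et /= in Hp; case/andP: Hp => /adm_rel_le.
Qed.

Lemma path_shift l w b t :
  path (adm_rel (l :: w)) b.+1 (map S t) = path (adm_rel w) b t.
Proof. by rewrite path_map; apply: eq_path. Qed.

Lemma sorted_shift l w t :
  sorted (adm_rel (l :: w)) (map S t) = sorted (adm_rel w) t.
Proof. by case: t => //= b t; rewrite path_shift. Qed.

Lemma sorted_catr (r : rel nat) s1 s2 : sorted r (s1 ++ s2) -> sorted r s2.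
Proof. elim: s1 => //= a s1 IH H; apply: IH; exact: path_sorted H. Qed.

Lemma path_nseq (r : rel nat) x n : r x x -> path r x (nseq n x).
Proof. by move=> H; elim: n => //= n ->; rewrite H. Qed.

Lemma map_shift l w t :
  map (fun i => (nth x0 (l :: w) i).1) (map S t) =
  map (fun i => (nth x0 w i).1) t.
Proof. by rewrite -map_comp. Qed.

Lemma memE w m t : (t \in E w m) =
  [&& all (fun i => i < size w) t, sorted (adm_rel w) t &
      map (fun i => (nth x0 w i).1) t == m].
Proof.
elim: w m t => [|l w IH] m t.
  by case: m => [|y m]; case: t => [|a t].
apply/idP/idP.
  move=> /flattenP [s /mapP [i Hi ->]]; case: ifP => // Hb /mapP [t' Ht' ->].
  rewrite IH in Ht'; case/and3P: Ht' => Ha Hs /eqP Hm.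
  rewrite mem_iota add0n ltnS in Hi; case/andP: Hi => _ Hi.
  move: Hb; rewrite /blk size_takel // => /andP [Hl /all_pred1P Htk].
  rewrite size_takel // in Htk.
  apply/and3P; split.
  - by rewrite all_cat all_nseq orbT /= all_map.
  - case: i Hi Htk Hl Hm => [|i] Hi Htk Hl Hm; first by rewrite /= sorted_shift.
    rewrite /= cat_path; apply/andP; split.
      case: i {Hi Htk Hm} Hl => [|i] Hl //; apply: path_nseq.
      by rewrite /adm_rel /=; case: (l.2) Hl.
    have -> : last 0 (nseq i 0) = 0 by elim: i {Hi Htk Hm Hl}.
    case: t' {Ha Hm} Hs => [|b t'] Hs //=.
    by rewrite path_shift (Hs : path _ b t') andbT /adm_rel; case: ifP.
  - rewrite map_cat map_nseq map_shift Hm /= -Htk; exact/eqP/cat_take_drop.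
case/and3P => Ha Hs /eqP Hm.
have [i [t' Et]] := sorted_decomp _ _ _ Hs; subst t.
rewrite map_cat map_nseq map_shift /= in Hm.
have Hi : i <= size m by rewrite -Hm size_cat size_nseq leq_addr.
have Htk : take i m = nseq i l.1 by rewrite -Hm take_size_cat // size_nseq.
have Hdr : drop i m = map (fun i => (nth x0 w i).1) t'
  by rewrite -Hm drop_size_cat // size_nseq.
apply/flattenP; eexists; first by apply/mapP; exists i => //;
  rewrite mem_iota add0n ltnS Hi.
have -> : blk l (take i m).
  rewrite /blk Htk size_nseq; apply/andP; split; last first.
    by apply/all_pred1P; rewrite size_nseq.
  apply/implyP => Hl2; case: i {Hi Htk Hdr Hm Ha} Hs => [|[|i]] //.
  by rewrite /= /adm_rel /= Hl2.
apply/mapP; exists t' => //; rewrite IH Hdr eqxx andbT; apply/andP; split.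
  by move: Ha; rewrite all_cat all_map => /andP[].
by rewrite -(sorted_shift l); apply: sorted_catr Hs.
Qed.

Lemma uniqE w m : uniq (E w m).
Proof.
elim: w m => [|l w IH] m; first by case: m.
apply: (@uniq_flatten_map _ _ (find (fun a : nat => a != 0)) (fun i => if blk l (take i m) then [seq nseq i 0 ++ map S t | t <- E w (drop i m)] else [::])); first exact: iota_uniq.
  move=> i; case: ifP => // _; rewrite map_inj_uniq //.
  move=> a b /eqP; rewrite eqseq_cat // eqxx /= => /eqP; apply: inj_map.
  by move=> ? ? [].
move=> i y; case: ifP => // _ /mapP [t _ ->].
rewrite find_cat has_nseq andbF size_nseq.
by case: t => [|b t] //=; rewrite addn0.
Qed.

Definition sg w (t : seq nat) : int :=
  ((-1) ^+ count (fun i => ~~ (nth x0 w i).2) t)%R.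

Lemma ml_blk l s : magnus_letter l s =
  if blk l s then (if l.2 then 1 else (-1) ^+ size s)%R else 0%R.
Proof.
case: l => x [] /=; rewrite /blk /=; last by [].
rewrite /magnus_letter /=; case: s => [|a [|b s]] //=; rewrite ?andbT ?eqseq_cons ?andbT //.
by case: (a == x).
Qed.

Lemma magnusE w m : magnus w m = (\sum_(t <- E w m) sg w t)%R.
Proof.
elim: w m => [|l w IH] m.
  by case: m => [|y m]; rewrite /= ?big_seq1 ?big_nil.
change (ps_mul (magnus_letter l) (magnus w) m = (\sum_(t <- E (l :: w) m) sg (l :: w) t)%R).
have -> : E (l :: w) m = flatten [seq (if blk l (take i m) then [seq nseq i 0 ++ map S t | t <- E w (drop i m)] else [::]) | i <- iota 0 (size m).+1] by [].
rewrite /ps_mul big_flatten big_map. rewrite -(big_mkord (fun _ => true) (fun i => magnus_letter l (take i m) * magnus w (drop i m))%R) /index_iota subn0.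
apply: eq_big_seq => i; rewrite mem_iota add0n ltnS => /andP[_ Hi].
rewrite IH big_distrr ml_blk /=; case: ifP => Hb; last by rewrite big_nil big1 // => t _; rewrite GRing.mul0r.
rewrite big_map; apply: eq_bigr => t _.
rewrite /sg count_cat count_nseq count_map GRing.exprD size_takel //.
by case: (l.2) => /=; rewrite ?mul0n ?GRing.expr0 ?mul1n.
Qed.

End Aux.

Local Open Scope ring_scope.

Theorem theorem2p2 (X : eqType) (pt : X) (k : nat) (w : seq (X * bool)) :
  (1 <= k)%N -> reduced_word pt w ->
  forall m : seq X, size m = k -> all (fun x => x != pt) m ->
  ab (james_hopf pt k w) m = pi_k k (magnus w) m.
Proof.
move=> _ _ m Hk _.
rewrite /pi_k Hk eqxx (magnusE _ pt).
have Hp : perm_eq (E X w m) [seq t <- idx_tuples (size w) k |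
   admissible pt w t && ([seq (nth (pt, true) w i).1 | i <- t] == m)].
  apply: uniq_perm; first exact: uniqE.
    by rewrite filter_uniq // uniq_idx.
  move=> t; rewrite mem_filter (memE _ pt) mem_idx (admissibleE _ pt).
  case Hm: (_ == m); rewrite ?andbF //=; move/eqP: Hm => Hm.
  rewrite -Hk -Hm size_map eqxx /=.
  by case: (all _ _); case: (sorted _ _).
rewrite (perm_big _ Hp) big_filter big_mkcondr /ab /james_hopf big_map big_filter.
apply: eq_bigr => t _ /=; case: (_ == m) => //.
by rewrite /sg -signr_odd; case: odd.
Qed.
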